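(* Let $\mathbb{T}=\mathbb{R}/\mathbb{Z}$, let $u:\mathbb{T}\times[0,T]\to\mathbb{R}$ be smooth and $\varphi_0\in C^1(\mathbb{T})$. Consider the grid CIP scheme: $F_j^0=\varphi_0(x_j)$, $G_j^0=\varphi_0'(x_j)$; given $\{F_j^n,G_j^n\}_{j=0}^{M-1}$, let $\varphi_h^n\in V_h$ be the unique function with $\varphi_h^n(x_j)=F_j^n$, $(\varphi_h^n)'(x_j)=G_j^n$; compute, with $\boldsymbol{u}(y_0,y_1,t)=(u(y_0,t),\,y_1u_x(y_0,t))$ and $\boldsymbol{y}_j=(x_j,1)$, $\boldsymbol{k}_{j,1}^n=\boldsymbol{u}(\boldsymbol{y}_j,t^{n+1})$, $\boldsymbol{k}_{j,2}^n=\boldsymbol{u}(\boldsymbol{y}_j-\tfrac{\Delta t_n}{2}\boldsymbol{k}_{j,1}^n,t^{n+1}-\tfrac{\Delta t_n}{2})$, $\boldsymbol{k}_{j,3}^n=\boldsymbol{u}(\boldsymbol{y}_j-\Delta t_n(-\boldsymbol{k}_{j,1}^n+2\boldsymbol{k}_{j,2}^n),t^{n+1}-\Delta t_n)$, $(X_{0,j}^n,X_{1,j}^n)=\boldsymbol{y}_j-\Delta t_n(\tfrac16\boldsymbol{k}_{j,1}^n+\tfrac46\boldsymbol{k}_{j,2}^n+\tfrac16\boldsymbol{k}_{j,3}^n)$; and set $F_j^{n+1}=\varphi_h^n(X_{0,j}^n)$, $G_j^{n+1}=X_{1,j}^n\,(\varphi_h^n)'(X_{0,j}^n)$, $j=0,\dots,M-1$.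 Then the functions $\varphi_h^n$ satisfy $\varphi_h^0=\mathcal{I}_h\varphi_0$ and $\varphi_h^{n+1}=\mathcal{I}_h(\varphi_h^n\circ X^n)$ for $n=0,1,\dots,N-1$.
   Context: Temporal mesh $0=t^0<\dots<t^N=T$, $\Delta t_n=t^{n+1}-t^n$; spatial mesh $0=x_0<\dots<x_M=1$. $V_h$: $C^1(\mathbb{T})$ functions, cubic on each $[x_j,x_{j+1}]$. $\mathcal{I}_h:C^1(\mathbb{T})\to V_h$: $(\mathcal{I}_hg)(x_j)=g(x_j)$, $(\mathcal{I}_hg)'(x_j)=g'(x_j)$, $j=0,\dots,M-1$. $X^n:\mathbb{T}\to\mathbb{T}$: $k_1^n(x)=u(x,t^{n+1})$, $k_2^n(x)=u(x-\tfrac{\Delta t_n}{2}k_1^n(x),t^{n+1}-\tfrac{\Delta t_n}{2})$, $k_3^n(x)=u(x-\Delta t_n(-k_1^n(x)+2k_2^n(x)),t^{n+1}-\Delta t_n)$, $X^n(x)=x-\Delta t_n(\tfrac16k_1^n(x)+\tfrac46k_2^n(x)+\tfrac16k_3^n(x))$. *)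

(* Defs.v *)
From Stdlib Require Import Reals Lra ClassicalEpsilon.
From Coquelicot Require Import Coquelicot.
Open Scope R_scope.

(* Functions on the torus T = R/Z are represented as 1-periodic functions R -> R. *)
Definition periodic1 (f : R -> R) : Prop := forall y, f (y + 1) = f y.

Definition C1T (f : R -> R) : Prop :=
  periodic1 f /\ (forall y, ex_derive f y) /\ (forall y, continuous (Derive f) y).

Definition in_Vh (M : nat) (x : nat -> R) (f : R -> R) : Prop :=
  C1T f /\
  forall j, (j < M)%nat ->
    exists a b c d : R, forall y, x j <= y <= x (S j) ->
      f y = a + b * y + c * y ^ 2 + d * y ^ 3.

(* The function of V_h with nodal values F_j and nodal derivatives G_j, j < M
   (the paper proves it exists uniquely; we select it by Hilbert's epsilon). *)
Definition hermite (M : nat) (x : nat -> R) (F G : nat -> R) : R -> R :=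
  epsilon (inhabits (fun _ : R => 0))
    (fun f => in_Vh M x f /\
       forall j, (j < M)%nat -> f (x j) = F j /\ Derive f (x j) = G j).

Definition Ih (M : nat) (x : nat -> R) (g : R -> R) : R -> R :=
  hermite M x (fun j => g (x j)) (fun j => Derive g (x j)).

Definition ux (u : R -> R -> R) (y s : R) : R := Derive (fun z => u z s) y.

Definition dt (t : nat -> R) (n : nat) : R := t (S n) - t n.

Definition Xmap (u : R -> R -> R) (t : nat -> R) (n : nat) (y : R) : R :=
  let h := dt t n in
  let k1 := u y (t (S n)) in
  let k2 := u (y - h / 2 * k1) (t (S n) - h / 2) in
  let k3 := u (y - h * (- k1 + 2 * k2)) (t (S n) - h) in
  y - h * (1/6 * k1 + 4/6 * k2 + 1/6 * k3).

Definition ubold (u : R -> R -> R) (y : R * R) (s : R) : R * R :=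
  (u (fst y) s, snd y * ux u (fst y) s).
Definition vadd (a b : R * R) : R * R := (fst a + fst b, snd a + snd b).
Definition vscal (c : R) (a : R * R) : R * R := (c * fst a, c * snd a).

Definition Xgrid (u : R -> R -> R) (t : nat -> R) (x : nat -> R) (n j : nat)
  : R * R :=
  let h := dt t n in
  let yj := (x j, 1) in
  let k1 := ubold u yj (t (S n)) in
  let k2 := ubold u (vadd yj (vscal (- (h / 2)) k1)) (t (S n) - h / 2) in
  let k3 := ubold u (vadd yj (vscal (- h) (vadd (vscal (-1) k1) (vscal 2 k2))))
                 (t (S n) - h) in
  vadd yj (vscal (- h)
     (vadd (vadd (vscal (1/6) k1) (vscal (4/6) k2)) (vscal (1/6) k3))).

(* Main.v *)
Require Import Defs.
From Stdlib Require Import Reals Lra Lia ClassicalEpsilon PropExtensionality FunctionalExtensionality.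
From Coquelicot Require Import Coquelicot.
Open Scope R_scope.

Definition hcub (a b f0 g0 f1 g1 y : R) : R :=
  f0 + g0 * (y - a) + ((3*(f1-f0)/(b-a) - 2*g0 - g1)/(b-a)) * (y - a)^2
     + ((g0+g1 - 2*(f1-f0)/(b-a))/(b-a)^2) * (y - a)^3.
Definition hcub' (a b f0 g0 f1 g1 y : R) : R :=
  g0 + 2 * ((3*(f1-f0)/(b-a) - 2*g0 - g1)/(b-a)) * (y - a)
     + 3 * ((g0+g1 - 2*(f1-f0)/(b-a))/(b-a)^2) * (y - a)^2.

Lemma hcub_der a b f0 g0 f1 g1 c y :
  is_derive (fun z => hcub a b f0 g0 f1 g1 (z - c)) y (hcub' a b f0 g0 f1 g1 (y - c)).
Proof.
  unfold hcub, hcub'.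
  set (A := (3 * (f1 - f0) / (b - a) - 2 * g0 - g1) / (b - a)).
  set (B := (g0 + g1 - 2 * (f1 - f0) / (b - a)) / (b - a) ^ 2).
  auto_derive. auto. simpl. ring.
Qed.

Lemma hcub'_cont a b f0 g0 f1 g1 c y :
  continuity_pt (fun z => hcub' a b f0 g0 f1 g1 (z - c)) y.
Proof.
  unfold hcub'.
  set (A := (3 * (f1 - f0) / (b - a) - 2 * g0 - g1) / (b - a)).
  set (B := (g0 + g1 - 2 * (f1 - f0) / (b - a)) / (b - a) ^ 2).
  apply derivable_continuous_pt. exists (2 * A + 3 * B * (2 * (y - c - a))).
  apply is_derive_Reals. auto_derive. auto. simpl. ring.
Qed.
Lemma hcub_a a b f0 g0 f1 g1 : hcub a b f0 g0 f1 g1 a = f0.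
Proof. unfold hcub. ring. Qed.
Lemma hcub'_a a b f0 g0 f1 g1 : hcub' a b f0 g0 f1 g1 a = g0.
Proof. unfold hcub'. ring. Qed.
Lemma hcub_b a b f0 g0 f1 g1 : a <> b -> hcub a b f0 g0 f1 g1 b = f1.
Proof. intros. unfold hcub. field. intro; apply H; lra. Qed.
Lemma hcub'_b a b f0 g0 f1 g1 : a <> b -> hcub' a b f0 g0 f1 g1 b = g1.
Proof. intros. unfold hcub'. field. intro; apply H; lra. Qed.
Lemma hcub_poly a b f0 g0 f1 g1 : exists A B C D, forall y,
  hcub a b f0 g0 f1 g1 y = A + B * y + C * y ^ 2 + D * y ^ 3.
Proof.
  set (a2 := (3*(f1-f0)/(b-a) - 2*g0 - g1)/(b-a)).
  set (a3 := (g0+g1 - 2*(f1-f0)/(b-a))/(b-a)^2).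
  exists (f0 - g0 * a + a2 * a^2 - a3 * a^3), (g0 - 2 * a2 * a + 3 * a3 * a^2),
    (a2 - 3 * a3 * a), a3.
  intro y. unfold hcub. fold a2 a3. ring.
Qed.

Fixpoint gsel (x : nat -> R) (h : nat -> R -> R) (k : nat) (s : R) : R :=
  match k with
  | O => h O s
  | S k' => if Rle_dec (x (S k')) s then h (S k') s else gsel x h k' s
  end.

Definition ext (M : nat) (x : nat -> R) (h : nat -> R -> R) (y : R) : R :=
  gsel x h (M - 1) (y - IZR (Int_part y)).

Lemma mono_lt (M : nat) (x : nat -> R) :
  (forall j, (j < M)%nat -> x j < x (S j)) ->
  forall i k, (i < k)%nat -> (k <= M)%nat -> x i < x k.
Proof.
  intros Hx i k. induction k; intros. lia.
  destruct (Nat.eq_dec i k). subst. apply Hx; lia.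
  apply Rlt_trans with (x k). apply IHk; lia. apply Hx; lia.
Qed.

Lemma mono_le (M : nat) (x : nat -> R) :
  (forall j, (j < M)%nat -> x j < x (S j)) ->
  forall i k, (i <= k)%nat -> (k <= M)%nat -> x i <= x k.
Proof.
  intros Hx i k H1 H2. destruct (Nat.eq_dec i k). subst; lra.
  left; apply (mono_lt M); auto; lia.
Qed.

Lemma gsel_A x h j k s :
  (j <= k)%nat -> x j <= s -> (forall i, (j < i <= k)%nat -> s < x i) ->
  gsel x h k s = h j s.
Proof.
  induction k; intros Hjk Hs Hi.
  - assert (j = O) by lia. subst. reflexivity.
  - simpl. destruct (Nat.eq_dec j (S k)).
    + subst. destruct (Rle_dec (x (S k)) s). reflexivity. contradiction.
    + destruct (Rle_dec (x (S k)) s).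
      * exfalso. specialize (Hi (S k) ltac:(lia)). lra.
      * apply IHk. lia. auto. intros; apply Hi; lia.
Qed.

Lemma gsel_closed M x h :
  (forall j, (j < M)%nat -> x j < x (S j)) ->
  (forall j, (S j < M)%nat -> h j (x (S j)) = h (S j) (x (S j))) ->
  forall j s, (j < M)%nat -> x j <= s <= x (S j) -> gsel x h (M - 1) s = h j s.
Proof.
  intros Hx Hm j s Hj [H1 H2].
  destruct H2 as [H2 | H2].
  - apply gsel_A. lia. auto. intros i Hi.
    apply Rlt_le_trans with (x (S j)); auto. apply (mono_le M); auto; lia.
  - subst s. destruct (Nat.eq_dec (S j) M).
    + apply gsel_A. lia. auto. intros; lia.
    + rewrite Hm by lia. apply gsel_A. lia. lra.
      intros i Hi. apply (mono_lt M); auto; lia.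
Qed.

Lemma Int_part_uniq m y : IZR m <= y < IZR m + 1 -> Int_part y = m.
Proof.
  intros [H1 H2]. unfold Int_part.
  assert (m + 1 = up y)%Z.
  { apply tech_up; rewrite plus_IZR; simpl; lra. }
  lia.
Qed.

Lemma ext_rep M x h :
  (0 < M)%nat -> x O = 0 -> x M = 1 ->
  (forall j, (j < M)%nat -> x j < x (S j)) ->
  (forall j, (S j < M)%nat -> h j (x (S j)) = h (S j) (x (S j))) ->
  h O (x O) = h (M - 1)%nat (x M) ->
  forall m j z, (j < M)%nat -> x j <= z - IZR m <= x (S j) ->
  ext M x h z = h j (z - IZR m).
Proof.
  intros HM H0 H1 Hx Hm Hp m j z Hj Hz.
  assert (0 <= x j) by (rewrite <- H0; apply (mono_le M); auto; lia).
  assert (x (S j) <= 1) by (rewrite <- H1; apply (mono_le M); auto; lia).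
  unfold ext.
  rewrite <- (gsel_closed M x h Hx Hm j) by (auto; lra).
  destruct (Rlt_dec (z - IZR m) 1).
  - rewrite (Int_part_uniq m z) by lra. reflexivity.
  - assert (Hz1 : z - IZR m = 1) by lra.
    rewrite (Int_part_uniq (m + 1) z) by (rewrite plus_IZR; simpl; lra).
    rewrite plus_IZR. simpl.
    replace (z - (IZR m + 1)) with (x O) by lra.
    rewrite Hz1. rewrite <- H1.
    assert (x O < x 1%nat) by (apply Hx; lia).
    assert (x (M-1)%nat < x M) by (replace M with (S (M-1)) at 2 by lia; apply Hx; lia).
    rewrite (gsel_closed M x h Hx Hm O) by (auto; lra).
    rewrite (gsel_closed M x h Hx Hm (M-1)%nat); try lia.
    auto. replace (S (M-1)) with M by lia. lra.
Qed.

Lemma find_j (x : nat -> R) s : x O <= s -> forall n, s < x n ->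
  exists j, (j < n)%nat /\ x j <= s < x (S j).
Proof.
  intros H0 n. induction n; intros Hn. lra.
  destruct (Rle_dec (x n) s).
  - exists n. split. lia. lra.
  - destruct IHn as [j [Hj1 Hj2]]. lra. exists j. split. lia. auto.
Qed.

Lemma local_rep M x :
  (0 < M)%nat -> x O = 0 -> x M = 1 ->
  (forall j, (j < M)%nat -> x j < x (S j)) ->
  forall y, exists d, 0 < d /\ exists jL jR (mL mR : Z), (jL < M)%nat /\ (jR < M)%nat /\
   forall h,
   (forall j, (S j < M)%nat -> h j (x (S j)) = h (S j) (x (S j))) ->
   h O (x O) = h (M - 1)%nat (x M) ->
   (forall z, y - d <= z <= y -> ext M x h z = h jL (z - IZR mL)) /\
   (forall z, y <= z <= y + d -> ext M x h z = h jR (z - IZR mR)).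
Proof.
  intros HM H0 H1 Hx y.
  pose (k := Int_part y).
  destruct (base_Int_part y) as [Hk1 Hk2]. fold k in Hk1, Hk2.
  assert (Hs : x O <= y - IZR k < x M) by lra.
  destruct (find_j x (y - IZR k) (proj1 Hs) M (proj2 Hs)) as [j [Hj Hj2]].
  assert (Hxj : x j < x (S j)) by auto.
  assert (X0j : 0 <= x j) by (rewrite <- H0; apply (mono_le M); auto; lia).
  assert (XSj : x (S j) <= 1) by (rewrite <- H1; apply (mono_le M); auto; lia).
  destruct (Rlt_dec (x j) (y - IZR k)).
  - exists (Rmin (y - IZR k - x j) (x (S j) - (y - IZR k))). split.
    apply Rmin_pos; lra.
    exists j, j, k, k. split; auto. split; auto. intros h Hm Hp.
    pose proof (Rmin_l (y - IZR k - x j) (x (S j) - (y - IZR k))).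
    pose proof (Rmin_r (y - IZR k - x j) (x (S j) - (y - IZR k))).
    split; intros z Hz; apply (ext_rep M x h HM H0 H1 Hx Hm Hp); auto; lra.
  - assert (Hs0 : x j = y - IZR k) by lra.
    destruct j as [|j'].
    + assert (HM1 : x (M-1)%nat < x M) by (replace M with (S (M-1)) at 2 by lia; apply Hx; lia).
      assert (X0 : 0 <= x (M-1)%nat) by (rewrite <- H0; apply (mono_le M); auto; lia).
      exists (Rmin (x 1%nat - x O) (x M - x (M-1)%nat)). split.
      apply Rmin_pos; lra.
      exists (M-1)%nat, O, (k - 1)%Z, k. split. lia. split. lia. intros h Hm Hp.
      pose proof (Rmin_l (x 1%nat - x O) (x M - x (M-1)%nat)).
      pose proof (Rmin_r (x 1%nat - x O) (x M - x (M-1)%nat)).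
      split; intros z Hz; apply (ext_rep M x h HM H0 H1 Hx Hm Hp); try lia.
      rewrite minus_IZR. replace (S (M-1)) with M by lia. simpl. lra.
      lra.
    + assert (Hj' : x j' < x (S j')) by (apply Hx; lia).
      exists (Rmin (x (S j') - x j') (x (S (S j')) - x (S j'))). split.
      apply Rmin_pos; lra.
      exists j', (S j'), k, k. split. lia. split. lia. intros h Hm Hp.
      pose proof (Rmin_l (x (S j') - x j') (x (S (S j')) - x (S j'))).
      pose proof (Rmin_r (x (S j') - x j') (x (S (S j')) - x (S j'))).
      split; intros z Hz; apply (ext_rep M x h HM H0 H1 Hx Hm Hp); try lia; lra.
Qed.

Lemma glue_derive (f L Rf : R -> R) (y d l : R) : 0 < d ->
  (forall z, y - d <= z <= y -> f z = L z) ->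
  (forall z, y <= z <= y + d -> f z = Rf z) ->
  is_derive L y l -> is_derive Rf y l -> is_derive f y l.
Proof.
  intros Hd HL HR DL DR. apply is_derive_Reals. apply is_derive_Reals in DL, DR.
  intros eps Heps. destruct (DL eps Heps) as [a Ha]. destruct (DR eps Heps) as [b Hb].
  assert (Hp : 0 < Rmin d (Rmin a b)).
  { apply Rmin_pos. lra. apply Rmin_pos; [apply (cond_pos a) | apply (cond_pos b)]. }
  exists (mkposreal _ Hp). simpl. intros hh Hh0 Hh.
  pose proof (Rmin_l d (Rmin a b)). pose proof (Rmin_r d (Rmin a b)).
  pose proof (Rmin_l a b). pose proof (Rmin_r a b).
  pose proof (Rabs_def2 _ _ Hh) as [Ha1 Ha2].
  destruct (Rle_dec hh 0).
  - rewrite (HL (y + hh)) by lra. rewrite (HL y) by lra.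
    apply Ha; auto. apply Rabs_def1; lra.
  - rewrite (HR (y + hh)) by lra. rewrite (HR y) by lra.
    apply Hb; auto. apply Rabs_def1; lra.
Qed.

Lemma glue_cont (f L Rf : R -> R) (y d : R) : 0 < d ->
  (forall z, y - d <= z <= y -> f z = L z) ->
  (forall z, y <= z <= y + d -> f z = Rf z) ->
  continuity_pt L y -> continuity_pt Rf y -> continuity_pt f y.
Proof.
  intros Hd HL HR CL CR.
  unfold continuity_pt, continue_in, limit1_in, limit_in in *. simpl in *.
  intros eps Heps. destruct (CL eps Heps) as [a [Ha HA]]. destruct (CR eps Heps) as [b [Hb HB]].
  exists (Rmin d (Rmin a b)). split. apply Rmin_pos. lra. apply Rmin_pos; lra.
  intros z [Hz1 Hz2]. unfold R_dist in *.
  pose proof (Rmin_l d (Rmin a b)). pose proof (Rmin_r d (Rmin a b)).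
  pose proof (Rmin_l a b). pose proof (Rmin_r a b).
  pose proof (Rabs_def2 _ _ Hz2) as [Ha1 Ha2].
  destruct (Rle_dec z y).
  - rewrite (HL z) by lra. rewrite (HL y) by lra. apply HA. split; auto. apply Rabs_def1; lra.
  - rewrite (HR z) by lra. rewrite (HR y) by lra. apply HB. split; auto. apply Rabs_def1; lra.
Qed.

Lemma hermite_exists M x F G :
  (0 < M)%nat -> x O = 0 -> x M = 1 ->
  (forall j, (j < M)%nat -> x j < x (S j)) ->
  exists f, in_Vh M x f /\
       forall j, (j < M)%nat -> f (x j) = F j /\ Derive f (x j) = G j.
Proof.
  intros HM H0 H1 Hx.
  pose (Fx := fun k => if Nat.eqb k M then F O else F k).
  pose (Gx := fun k => if Nat.eqb k M then G O else G k).
  pose (pc := fun j s => hcub (x j) (x (S j)) (Fx j) (Gx j) (Fx (S j)) (Gx (S j)) s).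
  pose (pc' := fun j s => hcub' (x j) (x (S j)) (Fx j) (Gx j) (Fx (S j)) (Gx (S j)) s).
  assert (Hne : forall j, (j < M)%nat -> x j <> x (S j)) by (intros j Hj; specialize (Hx j Hj); lra).
  assert (HmF : forall j, (S j < M)%nat -> pc j (x (S j)) = pc (S j) (x (S j))).
  { intros j Hj. unfold pc. rewrite hcub_b by (apply Hne; lia). rewrite hcub_a. reflexivity. }
  assert (HmG : forall j, (S j < M)%nat -> pc' j (x (S j)) = pc' (S j) (x (S j))).
  { intros j Hj. unfold pc'. rewrite hcub'_b by (apply Hne; lia). rewrite hcub'_a. reflexivity. }
  assert (HSM : S (M - 1) = M) by lia.
  assert (HpF : pc O (x O) = pc (M-1)%nat (x M)).
  { unfold pc. rewrite hcub_a. rewrite HSM. rewrite hcub_b.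
    unfold Fx. rewrite (proj2 (Nat.eqb_eq M M)) by auto.
    destruct (Nat.eqb 0 M) eqn:E. apply Nat.eqb_eq in E; lia. reflexivity.
    rewrite <- HSM at 2. apply Hne; lia. }
  assert (HpG : pc' O (x O) = pc' (M-1)%nat (x M)).
  { unfold pc'. rewrite hcub'_a. rewrite HSM. rewrite hcub'_b.
    unfold Gx. rewrite (proj2 (Nat.eqb_eq M M)) by auto.
    destruct (Nat.eqb 0 M) eqn:E. apply Nat.eqb_eq in E; lia. reflexivity.
    rewrite <- HSM at 2. apply Hne; lia. }
  pose (f := ext M x pc). pose (D := ext M x pc').
  assert (Hder : forall y, is_derive f y (D y)).
  { intro y. destruct (local_rep M x HM H0 H1 Hx y) as [d [Hd [jL [jR [mL [mR [HjL [HjR Hrep]]]]]]]].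
    destruct (Hrep pc HmF HpF) as [FL FR]. destruct (Hrep pc' HmG HpG) as [DL DR].
    apply (glue_derive f (fun z => pc jL (z - IZR mL)) (fun z => pc jR (z - IZR mR)) y d); auto.
    - replace (D y) with (pc' jL (y - IZR mL)) by (symmetry; apply DL; lra). apply hcub_der.
    - replace (D y) with (pc' jR (y - IZR mR)) by (symmetry; apply DR; lra). apply hcub_der. }
  assert (Hcont : forall y, continuity_pt D y).
  { intro y. destruct (local_rep M x HM H0 H1 Hx y) as [d [Hd [jL [jR [mL [mR [HjL [HjR Hrep]]]]]]]].
    destruct (Hrep pc' HmG HpG) as [DL DR].
    apply (glue_cont D (fun z => pc' jL (z - IZR mL)) (fun z => pc' jR (z - IZR mR)) y d); auto;
    apply hcub'_cont. }
  assert (HDer : forall y, Derive f y = D y) by (intro; apply is_derive_unique; auto).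
  assert (Hnode : forall h, (forall j, (S j < M)%nat -> h j (x (S j)) = h (S j) (x (S j))) ->
     h O (x O) = h (M - 1)%nat (x M) ->
     forall j y, (j < M)%nat -> x j <= y <= x (S j) -> ext M x h y = h j y).
  { intros h Hm Hp j y Hj Hy. rewrite (ext_rep M x h HM H0 H1 Hx Hm Hp 0%Z j y Hj) by (simpl; lra).
    simpl. f_equal. ring. }
  exists f. split.
  - split; [split; [|split]|].
    + intro y. unfold f, ext.
      assert (Int_part (y + 1) = (Int_part y + 1)%Z).
      { apply Int_part_uniq. rewrite plus_IZR. simpl.
        destruct (base_Int_part y). lra. }
      rewrite H. rewrite plus_IZR. simpl. f_equal. ring.
    + intro y. eexists. apply Hder.
    + intro y. apply (continuous_ext D). intro; symmetry; auto.
      apply continuity_pt_filterlim. auto.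
    + intros j Hj. destruct (hcub_poly (x j) (x (S j)) (Fx j) (Gx j) (Fx (S j)) (Gx (S j)))
        as [A [B [C [E HE]]]].
      exists A, B, C, E. intros y Hy. unfold f. rewrite (Hnode pc HmF HpF j y Hj Hy).
      apply HE.
  - intros j Hj.
    assert (Hjj : x j <= x j <= x (S j)) by (specialize (Hx j Hj); lra).
    assert (Ej : Nat.eqb j M = false) by (apply Nat.eqb_neq; lia).
    split.
    + unfold f. rewrite (Hnode pc HmF HpF j (x j) Hj Hjj). unfold pc. rewrite hcub_a.
      unfold Fx. rewrite Ej. reflexivity.
    + rewrite HDer. unfold D. rewrite (Hnode pc' HmG HpG j (x j) Hj Hjj). unfold pc'. rewrite hcub'_a.
      unfold Gx. rewrite Ej. reflexivity.
Qed.
Lemma Xgrid_fst u t x n j : fst (Xgrid u t x n j) = Xmap u t n (x j).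
Proof.
  unfold Xgrid, Xmap, ubold, vadd, vscal. simpl.
  set (h := dt t n). set (y := x j). set (s1 := t (S n)).
  set (s2 := s1 - h / 2). set (s3 := s1 - h).
  replace (y + - (h / 2) * u y s1) with (y - h / 2 * u y s1) by ring.
  replace (y + - h * (-1 * u y s1 + 2 * u (y - h / 2 * u y s1) s2))
    with (y - h * (- u y s1 + 2 * u (y - h / 2 * u y s1) s2)) by ring.
  ring.
Qed.
Lemma Xmap_der u t x n j :
  (forall z, ex_derive (fun w => u w (t (S n))) z) ->
  (forall z, ex_derive (fun w => u w (t (S n) - dt t n / 2)) z) ->
  (forall z, ex_derive (fun w => u w (t (S n) - dt t n)) z) ->
  is_derive (Xmap u t n) (x j) (snd (Xgrid u t x n j)).
Proof.
  intros E1 E2 E3.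
  unfold Xgrid, Xmap, ubold, vadd, vscal, ux. simpl.
  set (h := dt t n). set (y := x j). set (s1 := t (S n)).
  set (s2 := s1 - h / 2). set (s3 := s1 - h).
  auto_derive. repeat split; auto.
  replace (y + - (h / 2 * u y s1)) with (y + - (h / 2) * u y s1) by ring.
  replace (y + - (h * (- u y s1 + 2 * u (y + - (h / 2) * u y s1) s2)))
    with (y + - h * (-1 * u y s1 + 2 * u (y + - (h / 2) * u y s1) s2)) by ring.
  ring.
Qed.

Lemma hermite_ext M x F G F' G' :
  (forall j, (j < M)%nat -> F j = F' j /\ G j = G' j) ->
  hermite M x F G = hermite M x F' G'.
Proof.
  intros H. unfold hermite. f_equal. apply functional_extensionality. intro f.
  apply propositional_extensionality. split; intros [H1 H2]; split; auto;
  intros j Hj; destruct (H j Hj); destruct (H2 j Hj); split; congruence.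
Qed.

Lemma hermite_spec M x F G :
  (0 < M)%nat -> x O = 0 -> x M = 1 ->
  (forall j, (j < M)%nat -> x j < x (S j)) ->
  in_Vh M x (hermite M x F G).
Proof.
  intros. unfold hermite.
  apply (epsilon_spec (inhabits (fun _ : R => 0))
    (fun f => in_Vh M x f /\
       forall j, (j < M)%nat -> f (x j) = F j /\ Derive f (x j) = G j)).
  apply hermite_exists; auto.
Qed.

Theorem lemma1 (N M : nat) (T : R) (t x : nat -> R) (u : R -> R -> R)
  (phi0 : R -> R) (F G : nat -> nat -> R) :
  (* temporal mesh 0 = t^0 < ... < t^N = T *)
  t 0%nat = 0 -> t N = T -> (forall n, (n < N)%nat -> t n < t (S n)) ->
  (* spatial mesh 0 = x_0 < ... < x_M = 1 *)
  (0 < M)%nat -> x 0%nat = 0 -> x M = 1 ->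
  (forall j, (j < M)%nat -> x j < x (S j)) ->
  (* u : T x [0,T] -> R smooth (1-periodic and C^infinity in space) *)
  (forall s, 0 <= s <= T -> periodic1 (fun y => u y s)) ->
  (forall s, 0 <= s <= T -> forall k y, ex_derive_n (fun z => u z s) k y) ->
  (* phi0 in C^1(T) *)
  C1T phi0 ->
  (* initial data of the grid CIP scheme *)
  (forall j, (j < M)%nat -> F 0%nat j = phi0 (x j) /\ G 0%nat j = Derive phi0 (x j)) ->
  (* update of the grid CIP scheme *)
  (forall n j, (n < N)%nat -> (j < M)%nat ->
     F (S n) j = hermite M x (F n) (G n) (fst (Xgrid u t x n j)) /\
     G (S n) j = snd (Xgrid u t x n j)
                 * Derive (hermite M x (F n) (G n)) (fst (Xgrid u t x n j))) ->
  hermite M x (F 0%nat) (G 0%nat) = Ih M x phi0 /\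
  forall n, (n < N)%nat ->
    hermite M x (F (S n)) (G (S n))
    = Ih M x (fun y => hermite M x (F n) (G n) (Xmap u t n y)).
Proof.
  intros H0 HT Ht HM Hx0 HxM Hx Hper Hsm Hphi Hinit Hupd.
  split.
  - unfold Ih. apply hermite_ext. auto.
  - intros n Hn.
    assert (Hlo : forall m, (m <= N)%nat -> 0 <= t m).
    { induction m; intros. lra. specialize (Ht m ltac:(lia)). specialize (IHm ltac:(lia)). lra. }
    assert (Hhi : forall k m, (m + k = N)%nat -> t m <= T).
    { induction k; intros m Hm. replace m with N by lia. lra.
      specialize (IHk (S m) ltac:(lia)). specialize (Ht m ltac:(lia)). lra. }
    assert (Htn := Ht n Hn). assert (Hl := Hlo n ltac:(lia)).
    assert (Hh := Hhi (N - S n)%nat (S n) ltac:(lia)).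
    assert (Ed : forall s, 0 <= s <= T -> forall z, ex_derive (fun w => u w s) z).
    { intros s Hs z. exact (Hsm s Hs 1%nat z). }
    unfold dt in *.
    assert (E1 := Ed (t (S n)) ltac:(lra)).
    assert (E2 := Ed (t (S n) - (t (S n) - t n) / 2) ltac:(lra)).
    assert (E3 := Ed (t (S n) - (t (S n) - t n)) ltac:(lra)).
    assert (Hsp := hermite_spec M x (F n) (G n) HM Hx0 HxM Hx).
    destruct Hsp as [[_ [Hd _]] _].
    unfold Ih. apply hermite_ext. intros j Hj. destruct (Hupd n j Hn Hj) as [A B]. split.
    + rewrite A, Xgrid_fst. reflexivity.
    + rewrite B. symmetry. apply is_derive_unique. rewrite Xgrid_fst.
      apply (is_derive_comp (hermite M x (F n) (G n)) (Xmap u t n)).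
      apply Derive_correct. apply Hd.
      apply Xmap_der; auto.
Qed.
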